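(* Let $z_i\in\mathbb{C}$, $r_i\ge1$, and let $P_i$ be a polynomial of degree $s_i<r_i$, written $P_i(z)=\sum_{j=0}^{s_i}a_{i,r_i-j}(z-z_i)^j$ with $a_{i,r_i}\ne0$. Put $Q_i=P_i(z)/(z-z_i)^{r_i}$. Then for every $n\ge0$, $$Q_i^{(n)}(z)=\frac{(-1)^n(r_i)_n\,a_{i,r_i}}{(z-z_i)^{r_i+n}}\big(1+S_i^n(z)\big),$$ where $S_i^n$ is a polynomial and $S_i^n\to0$ uniformly on compact subsets of $\mathbb{C}$ as $n\to\infty$.
   Context: $(j)_n=j(j+1)\cdots(j+n-1)$ is the ascending Pochhammer symbol. *)

(* Defs.v *)
From Stdlib Require Import Reals List.
From Coquelicot Require Import Coquelicot.
Import Complex.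
Open Scope C_scope.

Fixpoint poch (j n : nat) : nat :=
  match n with
  | O => 1%nat
  | S m => (poch j m * (j + m))%nat
  end.

Definition Cpoly_eval (l : list C) (z : C) : C :=
  fold_right (fun c acc => c + z * acc) 0 l.

Definition is_Cpoly (f : C -> C) : Prop :=
  exists l : list C, forall z, f z = Cpoly_eval l z.

Fixpoint is_derive_n_on (U : C -> Prop) (n : nat) (f g : C -> C) : Prop :=
  match n with
  | O => forall z, U z -> f z = g z
  | S m => exists h : C -> C,
      (forall z, U z -> is_derive f z (h z)) /\ is_derive_n_on U m h g
  end.

Definition compactC (K : C -> Prop) : Prop :=
  forall (I : Type) (Uc : I -> C -> Prop),
    (forall i, open (Uc i)) ->
    (forall z, K z -> exists i, Uc i z) ->
    exists l : list I, forall z, K z -> exists i, In i l /\ Uc i z.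

Definition unif_cv0_on (K : C -> Prop) (S : nat -> C -> C) : Prop :=
  forall eps : R, (0 < eps)%R ->
    exists N : nat, forall n, (N <= n)%nat -> forall z, K z -> (Cmod (S n z) < eps)%R.

(* Main.v *)
Require Import Defs.
From Stdlib Require Import Reals List Lia Lra.
From Coquelicot Require Import Coquelicot.
Import Complex.
Open Scope C_scope.

Lemma Cinv0 : Cinv (RtoC 0) = RtoC 0.
Proof. unfold Cinv; simpl. apply injective_projections; simpl; rewrite ?Ropp_0; lra. Qed.

Lemma Cpow_inv' (c : C) (n : nat) : (/ c) ^ n = / (c ^ n).
Proof.
  destruct (Ceq_dec c 0) as [->|H].
  - destruct n; simpl. { unfold Cinv; simpl. apply injective_projections; simpl; field. }
    rewrite Cinv0, !Cmult_0_l, Cinv0. reflexivity.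
  - now apply Cpow_inv.
Qed.

Lemma is_derive_Cinv (x : C) : x <> 0 ->
  is_derive (fun z : C => / z) x (- (/ x * / x)).
Proof.
  intros Hx. split. apply is_linear_scal_l.
  intros x' Hx'. apply (@is_filter_lim_locally_unique C_AbsRing (AbsRing_NormedModule C_AbsRing)) in Hx'. subst x'.
  intros eps.
  assert (Hm : 0 < Cmod x) by now apply Cmod_gt_0.
  set (d := Rmin (Cmod x / 2) (eps * (Cmod x)^3 / 2)).
  assert (Hd : 0 < d). { unfold d. apply Rmin_case; [lra|]. pose proof (cond_pos eps). apply Rmult_lt_0_compat; [|lra]. apply Rmult_lt_0_compat; auto. apply pow_lt; auto. }
  exists (mkposreal d Hd). intros y Hy. change C in y. change (Cmod (y - x) < d) in Hy.
  change (Cmod (minus (minus (/ y) (/ x)) (scal (minus y x) (- (/ x * / x)))) <= eps * Cmod (y - x)).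
  assert (Hyx : Cmod (y - x) < Cmod x / 2) by (eapply Rlt_le_trans; [exact Hy| apply Rmin_l]).
  assert (Hyx2 : Cmod (y - x) <= eps * (Cmod x)^3 / 2) by (left; eapply Rlt_le_trans; [exact Hy| apply Rmin_r]).
  assert (Hy0 : Cmod x / 2 <= Cmod y).
  { pose proof (Cmod_triangle y (- (y - x))) as H. rewrite Cmod_opp in H.
    replace (y + - (y - x)) with x in H by ring. lra. }
  assert (Hyn : y <> 0). { intro E. subst y. rewrite Cmod_0 in Hy0. lra. }
  change (minus (minus (/ y) (/ x)) (scal (minus y x) (- (/ x * / x)))) with
    ((/ y - / x) - (y - x) * (- (/ x * / x))).
  replace ((/ y - / x) - (y - x) * (- (/ x * / x))) with ((y - x) * (y - x) * / (x * x * y)) by (field; repeat split; auto).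
  rewrite !Cmod_mult, Cmod_inv by (apply Cmult_neq_0; auto; apply Cmult_neq_0; auto).
  rewrite !Cmod_mult.
  set (e := Cmod (y - x)). assert (0 <= e) by apply Cmod_ge_0.
  set (m := Cmod x) in *. set (my := Cmod y) in *.
  apply Rle_trans with (e * e * / (m * m * (m/2)))%R.
  { apply Rmult_le_compat_l. apply Rmult_le_pos; auto. apply Rinv_le_contravar. apply Rmult_lt_0_compat; [apply Rmult_lt_0_compat|]; lra.
    apply Rmult_le_compat_l; [apply Rmult_le_pos; lra| lra]. }
  replace (e * e * / (m * m * (m / 2)))%R with (e * (e * 2 / (m^3)))%R by (field; lra).
  rewrite Rmult_comm. apply Rmult_le_compat_r; auto.
  apply Rmult_le_reg_r with (m^3)%R. apply pow_lt; auto.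
  assert (Hm3 : (0 < m^3)%R) by (apply pow_lt; auto). unfold Rdiv. rewrite Rmult_assoc, Rinv_l by lra. rewrite Rmult_1_r. fold e in Hyx2. lra.
Qed.

Lemma tr (f : C -> C) x l : @is_derive C_AbsRing (AbsRing_NormedModule C_AbsRing) f x l -> @is_derive C_AbsRing C_NormedModule f x l.
Proof. intros [[H1 H2 H3] H]. split. split. exact H1. exact H2. exact H3. exact H. Qed.
Lemma tr2 (f : C -> C) x l : @is_derive C_AbsRing C_NormedModule f x l -> @is_derive C_AbsRing (AbsRing_NormedModule C_AbsRing) f x l.
Proof. intros [[H1 H2 H3] H]. split. split. exact H1. exact H2. exact H3. exact H. Qed.

Lemma D_mult (f g : C -> C) (x df dg : C) : is_derive f x df -> is_derive g x dg ->
  is_derive (fun z => f z * g z) x (df * g x + f x * dg).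
Proof.
  intros Hf Hg. apply tr. apply (is_derive_mult (K:=C_AbsRing) f g x df dg); try (apply tr2; assumption).
  intros; apply Cmult_comm.
Qed.

Lemma D_const (c x : C) : is_derive (fun _ : C => c) x (RtoC 0).
Proof. apply tr. replace (RtoC 0) with (@zero (AbsRing_NormedModule C_AbsRing)) by reflexivity. apply (is_derive_const (K:=C_AbsRing)). Qed.

Lemma D_shift (z0 x : C) : is_derive (fun z : C => z - z0) x (RtoC 1).
Proof.
  apply tr. replace (RtoC 1) with (@minus (AbsRing_NormedModule C_AbsRing) one zero).
  apply (is_derive_ext (fun z : C_AbsRing => @minus (AbsRing_NormedModule C_AbsRing) ((fun t => t) z) ((fun _ => z0) z))).
  intros; reflexivity.
  apply (is_derive_minus (K:=C_AbsRing)). apply is_derive_id. apply is_derive_const.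
  change ((1 : C) + - 0 = 1). ring.
Qed.

Lemma D_comp (f g : C -> C) (x df dg : C) : is_derive f (g x) df -> is_derive g x dg ->
  is_derive (fun z => f (g z)) x (dg * df).
Proof. intros Hf Hg. apply (is_derive_comp (K:=C_AbsRing) (V:=C_NormedModule) f g x df dg Hf). apply tr2, Hg. Qed.

Lemma D_pow (f : C -> C) (x df : C) (m : nat) : is_derive f x df ->
  is_derive (fun z => f z ^ m) x (INR m * df * f x ^ pred m).
Proof.
  intros Hf. induction m as [|m IH].
  - simpl. replace (RtoC 0 * df * 1) with (0 : C) by ring. apply D_const.
  - eapply is_derive_ext. { intros t. symmetry. apply Cpow_S. }
    replace (INR (S m) * df * f x ^ pred (S m)) with (df * f x ^ m + f x * (INR m * df * f x ^ pred m)).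
    apply D_mult; auto.
    destruct m as [|m].
    + simpl. ring.
    + rewrite (S_INR (S m)), RtoC_plus. simpl pred. rewrite Cpow_S. ring.
Qed.

Lemma D_u (z0 x : C) : x <> z0 -> is_derive (fun z => / (z - z0)) x (- (/ (x - z0)) ^ 2).
Proof.
  intros Hx. replace (- (/ (x - z0)) ^ 2) with (1 * (- (/ (x - z0) * / (x - z0)))) by (simpl; ring).
  apply (D_comp (fun w => / w) (fun z => z - z0)).
  apply is_derive_Cinv. intro E. apply Hx. replace x with ((x - z0) + z0) by ring. rewrite E. ring.
  apply D_shift.
Qed.

Lemma D_upow (z0 x : C) (m : nat) : x <> z0 ->
  is_derive (fun z => (/ (z - z0)) ^ m) x (- INR m * (/ (x - z0)) ^ (S m)).
Proof.
  intros Hx. pose proof (D_pow _ _ _ m (D_u z0 x Hx)) as H.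
  destruct m as [|m].
  - simpl in *. replace (- RtoC 0 * (/ (x - z0) * 1)) with (RtoC 0 * - (/ (x - z0) * (/ (x - z0) * 1)) * 1) by ring. exact H.
  - simpl pred in H. replace (- INR (S m) * (/ (x - z0)) ^ S (S m)) with (INR (S m) * - (/ (x - z0)) ^ 2 * (/ (x - z0)) ^ m).
    exact H. rewrite !Cpow_S. simpl. ring.
Qed.

Fixpoint padd (l m : list C) : list C :=
  match l, m with
  | nil, _ => m
  | _, nil => l
  | x :: l', y :: m' => (x + y) :: padd l' m'
  end.

Lemma padd_eval l m z : Cpoly_eval (padd l m) z = Cpoly_eval l z + Cpoly_eval m z.
Proof.
  revert m; induction l as [|x l IH]; intros m; destruct m as [|y m]; simpl; try ring.
  rewrite IH. ring.
Qed.

Fixpoint pmul (l m : list C) : list C :=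
  match l with
  | nil => nil
  | x :: l' => padd (map (fun y => x * y) m) (RtoC 0 :: pmul l' m)
  end.

Lemma map_eval x m z : Cpoly_eval (map (fun y => x * y) m) z = x * Cpoly_eval m z.
Proof. induction m as [|y m IH]; simpl; [ring|]. rewrite IH. ring. Qed.

Lemma pmul_eval l m z : Cpoly_eval (pmul l m) z = Cpoly_eval l z * Cpoly_eval m z.
Proof.
  induction l as [|x l IH]; simpl; [ring|]. rewrite padd_eval, map_eval. simpl. rewrite IH. ring.
Qed.

Lemma Cpoly_const c : is_Cpoly (fun _ => c).
Proof. exists (c :: nil). intros z. simpl. ring. Qed.

Lemma Cpoly_shift z0 : is_Cpoly (fun z => z - z0).
Proof. exists ((- z0) :: RtoC 1 :: nil). intros z. simpl. ring. Qed.

Lemma Cpoly_add f g : is_Cpoly f -> is_Cpoly g -> is_Cpoly (fun z => f z + g z).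
Proof. intros [l Hl] [m Hm]. exists (padd l m). intros z. rewrite padd_eval, Hl, Hm. reflexivity. Qed.

Lemma Cpoly_mul f g : is_Cpoly f -> is_Cpoly g -> is_Cpoly (fun z => f z * g z).
Proof. intros [l Hl] [m Hm]. exists (pmul l m). intros z. rewrite pmul_eval, Hl, Hm. reflexivity. Qed.

Lemma Cpoly_pow f k : is_Cpoly f -> is_Cpoly (fun z => f z ^ k).
Proof.
  intros Hf. induction k as [|k IH]; simpl.
  - apply Cpoly_const.
  - apply (Cpoly_mul f (fun z => f z ^ k)); auto.
Qed.

Lemma Cpoly_sum (g : nat -> C -> C) s : (forall j, is_Cpoly (g j)) ->
  is_Cpoly (fun z => sum_n (fun j => g j z) s).
Proof.
  intros Hg. induction s as [|s IH].
  - destruct (Hg O) as [l Hl]. exists l. intros z. rewrite sum_O. apply Hl.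
  - destruct IH as [l Hl]. destruct (Hg (S s)) as [m Hm]. exists (padd l m). intros z.
    rewrite sum_Sn, padd_eval, <- Hl, <- Hm. reflexivity.
Qed.

Lemma dn_ext U n (f f' g : C -> C) : (forall z, f z = f' z) -> is_derive_n_on U n f' g -> is_derive_n_on U n f g.
Proof.
  destruct n as [|n]; simpl.
  - intros E H z Hz. rewrite E. auto.
  - intros E [h [H1 H2]]. exists h. split; auto. intros z Hz. eapply is_derive_ext. 2: apply H1; auto.
    intros t; simpl. now rewrite E.
Qed.

Lemma dn_chain U (G : nat -> C -> C) : (forall m z, U z -> is_derive (G m) z (G (S m) z)) ->
  forall n m g, (forall z, U z -> G (m + n)%nat z = g z) -> is_derive_n_on U n (G m) g.
Proof.
  intros HG n. induction n as [|n IH]; intros m g Hg; simpl.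
  - intros z Hz. rewrite <- Hg by auto. now rewrite Nat.add_0_r.
  - exists (G (S m)). split. intros z Hz. apply HG; auto.
    apply IH. intros z Hz. rewrite <- Hg by auto. now rewrite Nat.add_succ_r.
Qed.

Definition Fn (a : nat -> C) (r s : nat) (z0 : C) (n : nat) (z : C) : C :=
  sum_n (fun j => a (r - j)%nat * ((-1) ^ n * RtoC (INR (poch (r - j) n))) * (/ (z - z0)) ^ (r - j + n)) s.

Lemma Fn_deriv a r s z0 n z : (s < r)%nat -> z <> z0 -> is_derive (Fn a r s z0 n) z (Fn a r s z0 (S n) z).
Proof.
  intros Hsr Hz. unfold Fn.
  apply (is_derive_sum_n (K:=C_AbsRing) (V:=C_NormedModule)
     (fun j y => a (r - j)%nat * ((-1) ^ n * RtoC (INR (poch (r - j) n))) * (/ (y - z0)) ^ (r - j + n))).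
  intros k Hk.
  replace (a (r - k)%nat * ((-1) ^ S n * RtoC (INR (poch (r - k) (S n)))) * (/ (z - z0)) ^ (r - k + S n))
    with (RtoC 0 * (/ (z - z0)) ^ (r - k + n) + a (r - k)%nat * ((-1) ^ n * RtoC (INR (poch (r - k) n))) * (- INR (r - k + n) * (/ (z - z0)) ^ (S (r - k + n)))).
  apply (D_mult (fun _ => a (r - k)%nat * ((-1) ^ n * RtoC (INR (poch (r - k) n)))) (fun y => (/ (y - z0)) ^ (r - k + n))).
  apply D_const. apply D_upow; auto.
  rewrite Nat.add_succ_r. simpl poch. rewrite mult_INR, RtoC_mult, plus_INR, RtoC_plus.
  rewrite (Cpow_S (-1)). ring.
Qed.

Lemma Cpow_0_S k : (RtoC 0) ^ (S k) = RtoC 0.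
Proof. simpl. ring. Qed.

Lemma powinv_split (w : C) j r : w <> RtoC 0 -> (j <= r)%nat -> w ^ j * / (w ^ r) = (/ w) ^ (r - j).
Proof.
  intros Hw Hjr. rewrite <- Cpow_inv'. replace r with ((r - j) + j)%nat at 1 by lia.
  rewrite Cpow_add_r.
  replace (w ^ j * ((/ w) ^ (r - j) * (/ w) ^ j)) with ((/ w) ^ (r - j) * (w * / w) ^ j) by (rewrite Cpow_mult_l; ring).
  rewrite Cinv_r by auto. rewrite Cpow_1_l. ring.
Qed.

Lemma Q_F0 a r s z0 z : (1 <= r)%nat -> (s < r)%nat ->
  sum_n (fun j => a (r - j)%nat * (z - z0) ^ j) s / (z - z0) ^ r = Fn a r s z0 0 z.
Proof.
  intros Hr Hsr. unfold Fn, Cdiv.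
  transitivity (sum_n (fun j => a (r - j)%nat * (z - z0) ^ j * / (z - z0) ^ r) s).
  { symmetry. apply (sum_n_mult_r (K:=C_Ring)). }
  apply sum_n_ext_loc. intros j Hj.
  simpl Cpow. rewrite Nat.add_0_r.
  destruct (Ceq_dec (z - z0) (RtoC 0)) as [E|E].
  - rewrite E. destruct r as [|r']; [lia|]. rewrite Cpow_0_S, Cinv0.
    replace (S r' - j)%nat with (S (r' - j)) by lia. rewrite Cpow_0_S. simpl. ring.
  - rewrite <- Cmult_assoc, powinv_split by (auto; lia). simpl. ring.
Qed.

Definition dcoef (a : nat -> C) (r n j : nat) : C :=
  match j with
  | O => RtoC 0
  | S _ => a (r - j)%nat * RtoC (INR (poch (r - j) n)) / (RtoC (INR (poch r n)) * a r)
  end.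

Lemma sum_split0 (g : nat -> C) s :
  sum_n g s = g O + sum_n (fun j => match j with O => RtoC 0 | S _ => g j end) s.
Proof.
  induction s as [|s IH].
  - rewrite !sum_O. change (g O = g O + RtoC 0). ring.
  - rewrite !sum_Sn, IH. change (g O + sum_n (fun j => match j with O => RtoC 0 | S _ => g j end) s + g (S s) =
      g O + (sum_n (fun j => match j with O => RtoC 0 | S _ => g j end) s + g (S s))). ring.
Qed.

Lemma poch_pos k n : (1 <= k)%nat -> (0 < poch k n)%nat.
Proof. intros Hk. induction n as [|n IH]; simpl; nia. Qed.

Lemma RtoC_INR_neq0 p : (0 < p)%nat -> RtoC (INR p) <> RtoC 0.
Proof.
  intros Hp E. apply (f_equal fst) in E. simpl in E. apply lt_0_INR in Hp. lra.
Qed.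

Lemma target_eq a r s z0 n z : (1 <= r)%nat -> (s < r)%nat -> a r <> RtoC 0 -> z <> z0 ->
  Fn a r s z0 n z = (-1) ^ n * RtoC (INR (poch r n)) * a r / (z - z0) ^ (r + n)
                   * (1 + sum_n (fun j => dcoef a r n j * (z - z0) ^ j) s).
Proof.
  intros Hr Hsr Ha Hz.
  assert (Hw : z - z0 <> RtoC 0). { intro E. apply Hz. replace z with ((z - z0) + z0) by ring. rewrite E. ring. }
  assert (HP : RtoC (INR (poch r n)) <> RtoC 0) by (apply RtoC_INR_neq0, poch_pos; lia).
  unfold Fn. rewrite sum_split0. rewrite Cmult_plus_distr_l, Cmult_1_r.
  set (K := (-1) ^ n * RtoC (INR (poch r n)) * a r / (z - z0) ^ (r + n)).
  assert (EK : K * sum_n (fun j => dcoef a r n j * (z - z0) ^ j) s = sum_n (fun j => K * (dcoef a r n j * (z - z0) ^ j)) s).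
  { symmetry. apply (sum_n_mult_l (K:=C_Ring)). }
  rewrite EK. unfold K. f_equal.
  - rewrite Nat.sub_0_r. unfold Cdiv. rewrite <- Cpow_inv'. ring.
  - apply sum_n_ext_loc. intros j Hj. match goal with |- ?x = ?y => change (@eq C x y) end.
    destruct j as [|j']; simpl dcoef.
    + ring.
    + set (j := S j') in *.
      set (A := (/ (z - z0)) ^ (r - j + n)). set (B := (/ (z - z0)) ^ j).
      assert (HAB : / (z - z0) ^ (r + n) = A * B).
      { unfold A, B. rewrite <- Cpow_inv', <- Cpow_add_r. f_equal. lia. }
      assert (HB : B * (z - z0) ^ j = 1).
      { unfold B. rewrite <- Cpow_mult_l, Cinv_l by auto. apply Cpow_1_l. }
      unfold Cdiv at 1. rewrite HAB.
      replace ((-1) ^ n * RtoC (INR (poch r n)) * a r * (A * B) *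
               (a (r - j)%nat * RtoC (INR (poch (r - j) n)) / (RtoC (INR (poch r n)) * a r) * (z - z0) ^ j))
        with (a (r - j)%nat * ((-1) ^ n * RtoC (INR (poch (r - j) n))) * A * (B * (z - z0) ^ j))
        by (field; split; auto).
      rewrite HB. ring.
Qed.

Lemma poch_step k n : (poch k n * (k + n) = k * poch (S k) n)%nat.
Proof.
  induction n as [|n IH]; simpl; [lia|].
  rewrite IH. replace (S (k + n)) with (k + S n)%nat by lia. ring.
Qed.

Lemma poch_mono k k' n : (k <= k')%nat -> (poch k n <= poch k' n)%nat.
Proof. intros H. induction n as [|n IH]; simpl; [lia|]. apply Nat.mul_le_mono; lia. Qed.

Lemma poch_0_S n : poch 0 (S n) = 0%nat.
Proof. induction n as [|n IH]; simpl in *; [reflexivity|]. rewrite IH. reflexivity. Qed.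

Lemma poch_ratio k r n : (k < r)%nat -> (poch k n * (n + 1) <= r * poch r n)%nat.
Proof.
  intros Hkr. destruct k as [|k].
  - destruct n as [|n]. simpl. lia. rewrite poch_0_S. lia.
  - assert (H1 : (poch (S k) n * (n + 1) <= poch (S k) n * (S k + n))%nat) by (apply Nat.mul_le_mono_l; lia).
    rewrite poch_step in H1.
    assert (H2 := poch_mono (S (S k)) r n ltac:(lia)).
    assert (H3 : (S k * poch (S (S k)) n <= r * poch r n)%nat) by (apply Nat.mul_le_mono; lia).
    lia.
Qed.

Lemma Rdiv_le_helper a b c d : (0 < b)%R -> (0 < d)%R -> (a * d <= c * b)%R -> (a / b <= c / d)%R.
Proof.
  intros Hb Hd H.
  replace (a / b)%R with (a * d * / (b * d))%R by (field; lra).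
  replace (c / d)%R with (c * b * / (b * d))%R by (field; lra).
  apply Rmult_le_compat_r; auto. left. apply Rinv_0_lt_compat. nra.
Qed.

Lemma ratio_bound k r n : (k < r)%nat -> (1 <= r)%nat ->
  (INR (poch k n) / INR (poch r n) <= INR r / (INR n + 1))%R.
Proof.
  intros Hkr Hr. apply Rdiv_le_helper.
  apply lt_0_INR, poch_pos; lia.
  pose proof (pos_INR n); lra.
  pose proof (poch_ratio k r n Hkr) as H. apply le_INR in H.
  rewrite !mult_INR, plus_INR in H. simpl in H. lra.
Qed.

Lemma dcoef_bound a r s n j : (1 <= r)%nat -> (s < r)%nat -> (j <= s)%nat -> a r <> RtoC 0 ->
  (Cmod (dcoef a r n j) <= Cmod (a (r - j)%nat) / Cmod (a r) * INR r / (INR n + 1))%R.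
Proof.
  intros Hr Hsr Hj Ha.
  assert (Har : (0 < Cmod (a r))%R) by now apply Cmod_gt_0.
  assert (Hn : (0 < INR n + 1)%R) by (pose proof (pos_INR n); lra).
  destruct j as [|j']; simpl dcoef.
  - rewrite Cmod_0. apply Rmult_le_pos. apply Rmult_le_pos. apply Rmult_le_pos. apply Cmod_ge_0.
    left; apply Rinv_0_lt_compat; auto. apply pos_INR. left; apply Rinv_0_lt_compat; auto.
  - assert (HP : (0 < INR (poch r n))%R) by (apply lt_0_INR, poch_pos; lia).
    assert (HPC : RtoC (INR (poch r n)) <> RtoC 0) by (apply RtoC_INR_neq0, poch_pos; lia).
    unfold Cdiv. rewrite !Cmod_mult, Cmod_inv by (apply Cmult_neq_0; auto).
    rewrite Cmod_mult, !Cmod_R, !Rabs_pos_eq by apply pos_INR.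
    pose proof (ratio_bound (r - S j') r n ltac:(lia) Hr) as H.
    pose proof (Cmod_ge_0 (a (r - S j')%nat)) as H0.
    replace (Cmod (a (r - S j')%nat) * INR (poch (r - S j') n) * / (INR (poch r n) * Cmod (a r)))%R
      with (Cmod (a (r - S j')%nat) / Cmod (a r) * (INR (poch (r - S j') n) / INR (poch r n)))%R by (field; lra).
    replace (Cmod (a (r - S j')%nat) / Cmod (a r) * INR r / (INR n + 1))%R
      with (Cmod (a (r - S j')%nat) / Cmod (a r) * (INR r / (INR n + 1)))%R by (field; lra).
    apply Rmult_le_compat_l; auto. apply Rmult_le_pos; auto. left; apply Rinv_0_lt_compat; auto.
Qed.

Lemma sum_bound a r s z0 (K : C -> Prop) M : (1 <= r)%nat -> (s < r)%nat -> a r <> RtoC 0 -> (0 <= M)%R ->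
  (forall z, K z -> (Cmod (z - z0) <= M)%R) ->
  forall m, (m <= s)%nat -> exists B : R, forall n z, K z ->
    (Cmod (sum_n (fun j => (dcoef a r n j * (z - z0) ^ j)%C) m) <= B / (INR n + 1))%R.
Proof.
  intros Hr Hsr Ha HM HK.
  assert (Har : (0 < Cmod (a r))%R) by now apply Cmod_gt_0.
  assert (Hterm : forall j n z, (j <= s)%nat -> K z ->
    (Cmod ((dcoef a r n j * (z - z0) ^ j)%C) <= (Cmod (a (r - j)%nat) / Cmod (a r) * INR r * M ^ j) / (INR n + 1))%R).
  { intros j n z Hj Hz. rewrite Cmod_mult, Cmod_pow.
    assert (Hn : (0 < INR n + 1)%R) by (pose proof (pos_INR n); lra).
    pose proof (dcoef_bound a r s n j Hr Hsr Hj Ha).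
    assert (Hp : (Cmod (z - z0) ^ j <= M ^ j)%R) by (apply pow_incr; split; [apply Cmod_ge_0| auto]).
    replace (Cmod (a (r - j)%nat) / Cmod (a r) * INR r * M ^ j / (INR n + 1))%R
      with ((Cmod (a (r - j)%nat) / Cmod (a r) * INR r / (INR n + 1)) * M ^ j)%R by (field; lra).
    apply Rmult_le_compat; auto. apply Cmod_ge_0. apply pow_le, Cmod_ge_0. }
  induction m as [|m IH]; intros Hm.
  - exists (Cmod (a (r - 0)%nat) / Cmod (a r) * INR r * M ^ 0)%R. intros n z Hz. rewrite sum_O. apply Hterm; auto; lia.
  - destruct IH as [B HB]; [lia|].
    exists (B + Cmod (a (r - S m)%nat) / Cmod (a r) * INR r * M ^ (S m))%R. intros n z Hz.
    rewrite sum_Sn. eapply Rle_trans. apply Cmod_triangle.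
    assert (Hn : (0 < INR n + 1)%R) by (pose proof (pos_INR n); lra).
    pose proof (HB n z Hz). pose proof (Hterm (S m) n z Hm Hz).
    replace ((B + Cmod (a (r - S m)%nat) / Cmod (a r) * INR r * M ^ S m) / (INR n + 1))%R
      with (B / (INR n + 1) + Cmod (a (r - S m)%nat) / Cmod (a r) * INR r * M ^ S m / (INR n + 1))%R by (field; lra).
    apply Rplus_le_compat; auto.
Qed.

Lemma list_bound (l : list nat) : exists M, (0 <= M)%R /\ forall i, In i l -> (INR i <= M)%R.
Proof.
  induction l as [|x l [M [HM H]]].
  - exists 0%R. split; [lra|]. intros i [].
  - exists (Rmax (INR x) M). split. eapply Rle_trans; [exact HM| apply Rmax_r].
    intros i [<-|Hi]. apply Rmax_l. eapply Rle_trans; [apply H; auto| apply Rmax_r].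
Qed.

Lemma compact_bounded (K : C -> Prop) z0 : compactC K -> exists M, (0 <= M)%R /\ forall z, K z -> (Cmod (z - z0) <= M)%R.
Proof.
  intros HK.
  destruct (HK nat (fun i z => (Cmod (z - z0) < INR i)%R)) as [l Hl].
  - intros i z Hz. apply (@locally_le_locally_norm C_AbsRing C_NormedModule z).
    assert (He : (0 < INR i - Cmod (z - z0))%R) by lra.
    exists (mkposreal _ He). intros y Hy. unfold ball_norm in Hy. simpl in Hy. change (Cmod (y - z) < INR i - Cmod (z - z0))%R in Hy.
    pose proof (Cmod_triangle (y - z) (z - z0)). replace (y - z + (z - z0)) with (y - z0) in H by ring. lra.
  - intros z _. destruct (INR_unbounded (Cmod (z - z0))) as [i Hi]. exists i. lra.
  - destruct (list_bound l) as [M [HM HMl]]. exists M. split; auto.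
    intros z Hz. destruct (Hl z Hz) as [i [Hi Hzi]]. pose proof (HMl i Hi). lra.
Qed.

Theorem lemma4p1 (z0 : C) (r s : nat) (a : nat -> C) :
  (1 <= r)%nat -> (s < r)%nat ->
  a (r - s)%nat <> 0 -> (* P has degree exactly s *)
  a r <> 0 ->
  exists S : nat -> C -> C,
    (forall n, is_Cpoly (S n)) /\
    (forall n : nat,
       is_derive_n_on (fun z => z <> z0) n
         (fun z => sum_n (fun j => a (r - j)%nat * (z - z0) ^ j) s / (z - z0) ^ r)
         (fun z => (-1) ^ n * RtoC (INR (poch r n)) * a r / (z - z0) ^ (r + n)
                   * (1 + S n z))) /\
    (forall K : C -> Prop, compactC K -> unif_cv0_on K S).
Proof.
  intros Hr Hsr _ Ha.
  exists (fun n z => sum_n (fun j => dcoef a r n j * (z - z0) ^ j) s).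
  split; [|split].
  - intros n. apply (Cpoly_sum (fun j z => dcoef a r n j * (z - z0) ^ j)).
    intros j. apply (Cpoly_mul (fun _ => dcoef a r n j) (fun z => (z - z0) ^ j)).
    apply Cpoly_const. apply Cpoly_pow, Cpoly_shift.
  - intros n. apply dn_ext with (f' := Fn a r s z0 0).
    { intros z. apply Q_F0; auto. }
    apply (dn_chain (fun z => z <> z0) (Fn a r s z0)).
    { intros m z Hz. apply Fn_deriv; auto. }
    intros z Hz. simpl. apply target_eq; auto.
  - intros K HK. destruct (compact_bounded K z0 HK) as [M [HM HKM]].
    destruct (sum_bound a r s z0 K M Hr Hsr Ha HM HKM s (le_n s)) as [B HB].
    intros eps Heps.
    destruct (INR_unbounded (B / eps)) as [N HN].
    exists N. intros n Hn z Hz.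
    eapply Rle_lt_trans. apply (HB n z Hz).
    assert (HNn : (INR N <= INR n)%R) by (apply le_INR; auto).
    assert (Hn1 : (0 < INR n + 1)%R) by (pose proof (pos_INR n); lra).
    assert (HBe : (B < eps * (INR n + 1))%R).
    { assert (H1 : (B / eps < INR n + 1)%R) by lra.
      apply (Rmult_lt_compat_l eps) in H1; auto.
      replace (eps * (B / eps))%R with B in H1 by (field; lra). exact H1. }
    apply (Rmult_lt_reg_r (INR n + 1)); auto.
    replace (B / (INR n + 1) * (INR n + 1))%R with B by (field; lra). exact HBe.
Qed.
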